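(* Let $L\ge2$, $k\ge2$ be integers and $\kappa:\{1,\dots,k-1\}\to\{0,\dots,L-1\}$ a map. Let $(a(n))_{n=0}^\infty$ be the $(L,k,\kappa)$-TM sequence built with the map $(s,n)\mapsto\kappa(s)$ (independent of $n$). Then $(a(n))_{n=0}^\infty$ is ultimately periodic if and only if $$s\,\kappa(1)\equiv\kappa(s)\pmod L\ \text{ for all }1\le s\le k-1,\quad\text{and}\quad \kappa(k-1)\equiv0\pmod L.$$ Moreover, if $(a(n))_{n=0}^\infty$ is not ultimately periodic, then none of its equally spaced subsequences $(a(N+tl))_{t=0}^\infty$ ($N\ge0$, $l>0$) is ultimately periodic.
   Context: Let $a_0,\dots,a_{L-1}$ be pairwise distinct complex numbers and $f$ the map on $\{a_0,\dots,a_{L-1}\}$ with $f(a_i)=a_{i+1}$ (indices mod $L$), extended letterwise to finite words; $f^j$ its $j$-fold iterate, $f^0$ the identity. For a map $\kappa':\{1,\dots,k-1\}\times\mathbb{N}\to\{0,\dots,L-1\}$ define $A_0=a_0$, $A_{n+1}=A_n\,f^{\kappa'(1,n)}(A_n)\cdots f^{\kappa'(k-1,n)}(A_n)$ (concatenation); the limit infinite word, indexed from $0$, is the $(L,k,\kappa')$-TM sequence. A sequence $(b(n))$ is ultimately periodic if there are $N\ge0$, $l>0$ with $b(n)=b(n+l)$ for all $n\ge N$. *)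

(* Defs.v *)
From mathcomp Require Import all_boot.
Set Implicit Arguments. Unset Strict Implicit. Unset Printing Implicit Defensive.

(* Letters a_0..a_{L-1} are encoded by their indices 0..L-1; the actual
   letter a_i is recovered through the injective map [a].  On indices,
   f(a_i) = a_{i+1 mod L} becomes  i |-> (i+1) %% L. *)
Definition fidx (L : nat) (i : nat) : nat := i.+1 %% L.

(* A_n, as a word of letter indices.  kap s n = kappa'(s, n);
   block s = 0 is A_n itself (f^0 = identity). *)
Fixpoint TMword (L k : nat) (kap : nat -> nat -> nat) (n : nat) : seq nat :=
  match n with
  | 0 => [:: 0]
  | n'.+1 =>
      let A := TMword L k kap n' in
      flatten [seq (if s == 0 then A else map (iter (kap s n') (fidx L)) A)
              | s <- iota 0 k]
  end.

(* The limit word: for k >= 2, |A_m| = k^m > m and A_m is a prefix of all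
   later A_n, so the m-th letter of the limit is the m-th letter of A_m. *)
Definition TMseq (T : Type) (L k : nat) (kap : nat -> nat -> nat) (a : nat -> T)
  (m : nat) : T := a (nth 0 (TMword L k kap m) m).

Definition ult_periodic (T : Type) (b : nat -> T) : Prop :=
  exists N l, 0 < l /\ forall n, N <= n -> b n = b (n + l).

(* Main.v *)
Require Import Defs.
From mathcomp Require Import all_boot zify.
From Stdlib Require Import Classical.
Set Implicit Arguments. Unset Strict Implicit. Unset Printing Implicit Defensive.

Definition kap0 (kappa : nat -> nat) (s : nat) := if s == 0 then 0 else kappa s.

Fixpoint G (L k : nat) (kappa : nat -> nat) (n i : nat) : nat :=
  match n with
  | 0 => 0
  | n'.+1 => (G L k kappa n' (i %% k ^ n') + kap0 kappa (i %/ k ^ n')) %% L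
  end.

Lemma G_lt L k kappa n i : 0 < L -> G L k kappa n i < L.
Proof. move=> L0; case: n => [|n] //=; exact: ltn_pmod. Qed.

Lemma iter_fidx L c x : x < L -> iter c (fidx L) x = (x + c) %% L.
Proof.
move=> xL; elim: c => [|c IH] /=; first by rewrite addn0 modn_small.
by rewrite IH /fidx addnS -[((x + c) %% L).+1]addn1 modnDml addn1.
Qed.

Lemma flatten_blocks (B : nat -> seq nat) w b c :
  (forall s, size (B s) = w) ->
  size (flatten [seq B s | s <- iota b c]) = c * w /\
  forall i, i < c * w ->
  nth 0 (flatten [seq B s | s <- iota b c]) i = nth 0 (B (b + i %/ w)) (i %% w).
Proof.
move=> Hs; elim: c b => [|c IH] b; first by split => // i; rewrite mul0n.
have [IH1 IH2] := IH b.+1.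
split; first by rewrite /= size_cat Hs IH1 mulSn.
move=> i Hi /=; rewrite nth_cat Hs.
case: (ltnP i w) => Hiw.
  by rewrite divn_small // addn0 modn_small.
have [j Hj] : exists j, i = w + j by exists (i - w); lia.
subst i.
have w0 : 0 < w by move: Hi; rewrite mulSn; lia.
rewrite addKn IH2; last by move: Hi; rewrite mulSn; lia.
rewrite divnDl ?dvdnn // divnn w0 modnDl; congr (nth 0 (B _) _); lia.
Qed.

Lemma TMword_spec L k kappa n : 0 < L -> 0 < k ->
  size (TMword L k (fun s _ => kappa s) n) = k ^ n /\
  forall i, i < k ^ n -> nth 0 (TMword L k (fun s _ => kappa s) n) i = G L k kappa n i.
Proof.
move=> L0 k0; elim: n => [|n [IH1 IH2]].
  split => // i; rewrite expn0 ltnS leqn0 => /eqP -> //.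
set A := TMword L k (fun s _ => kappa s) n.
have Hs : forall s, size ((fun s => if s == 0 then A else map (iter (kappa s) (fidx L)) A) s) = k ^ n.
  by move=> s /=; case: (s == 0); rewrite ?size_map IH1.
have [F1 F2] := flatten_blocks 0 k Hs.
have E : TMword L k (fun s _ => kappa s) n.+1 =
   flatten [seq (fun s => if s == 0 then A else map (iter (kappa s) (fidx L)) A) s | s <- iota 0 k] by [].
rewrite E; split; first by rewrite F1 expnS.
move=> i Hi; rewrite F2; last by rewrite -expnS.
rewrite add0n.
have -> : G L k kappa n.+1 i = (G L k kappa n (i %% k ^ n) + kap0 kappa (i %/ k ^ n)) %% L by [].
have Hj : i %% k ^ n < k ^ n by rewrite ltn_pmod // expn_gt0 k0.
rewrite /kap0; case: (i %/ k ^ n =P 0) => Hd.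
  by rewrite /= addn0 IH2 // (modn_small (@G_lt L k kappa n (i %% k ^ n) L0)).
by rewrite (nth_map 0) ?IH1 // IH2 // iter_fidx // (@G_lt L k kappa n (i %% k ^ n) L0).
Qed.

Lemma G_S L k kappa n i : 0 < L -> i < k ^ n -> G L k kappa n.+1 i = G L k kappa n i.
Proof.
move=> L0 Hi.
have -> : G L k kappa n.+1 i = (G L k kappa n (i %% k ^ n) + kap0 kappa (i %/ k ^ n)) %% L by [].
by rewrite modn_small // divn_small // /kap0 /= addn0 modn_small // G_lt.
Qed.

Lemma G_mono L k kappa d n i : 0 < L -> 0 < k -> i < k ^ n ->
  G L k kappa (d + n) i = G L k kappa n i.
Proof.
move=> L0 k0 Hi; elim: d => [|d IH] //.
rewrite addSn G_S // (leq_trans Hi) // leq_pexp2l //; lia.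
Qed.

Lemma g_G L k kappa n i : 0 < L -> 1 < k -> i < k ^ n ->
  G L k kappa i i = G L k kappa n i.
Proof.
move=> L0 k1 Hi; have k0 : 0 < k by lia.
case: (leqP n i) => H.
  by rewrite -{1}(subnK H) G_mono //; lia.
have Hi' : i < k ^ i by rewrite ltn_expl.
by rewrite -(subnK (ltnW H)) G_mono.
Qed.

Lemma G_add L k kappa m n x y : 0 < L -> 0 < k -> x < k ^ n -> y < k ^ m ->
  G L k kappa (m + n) (x * k ^ m + y) = (G L k kappa n x + G L k kappa m y) %% L.
Proof.
move=> L0 k0; elim: n x => [|n IH] x Hx Hy.
  move: Hx; rewrite expn0 ltnS leqn0 => /eqP ->.
  by rewrite mul0n add0n addn0 /= add0n modn_small // G_lt.
have Km : 0 < k ^ m by rewrite expn_gt0 k0.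
have Kn : 0 < k ^ n by rewrite expn_gt0 k0.
set a := x %/ k ^ n; set b := x %% k ^ n.
have Hb : b < k ^ n by rewrite ltn_pmod.
have Hx' : x = a * k ^ n + b by rewrite /a /b -divn_eq.
have Hsmall : b * k ^ m + y < k ^ (m + n).
  rewrite expnD.
  have : (b + 1) * k ^ m <= k ^ n * k ^ m by rewrite leq_mul2r; apply/orP; right; lia.
  rewrite mulnC [k ^ m * _]mulnC; lia.
have Heq : x * k ^ m + y = a * k ^ (m + n) + (b * k ^ m + y).
  by rewrite Hx' expnD mulnDl addnA; congr (_ + _ + _); rewrite -mulnA [k ^ n * _]mulnC.
rewrite addnS.
have -> : G L k kappa (m + n).+1 (x * k ^ m + y) =
  (G L k kappa (m + n) ((x * k ^ m + y) %% k ^ (m + n)) + kap0 kappa ((x * k ^ m + y) %/ k ^ (m + n))) %% L by [].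
have -> : G L k kappa n.+1 x = (G L k kappa n (x %% k ^ n) + kap0 kappa (x %/ k ^ n)) %% L by [].
rewrite Heq modnMDl divnMDl ?expn_gt0 ?k0 // (modn_small Hsmall) (divn_small Hsmall) addn0 IH //.
by rewrite -/a -/b !modnDml addnAC.
Qed.

Definition g L k kappa i := G L k kappa i i.

Lemma g_add L k kappa x m y : 0 < L -> 1 < k -> y < k ^ m ->
  g L k kappa (x * k ^ m + y) = (g L k kappa x + g L k kappa y) %% L.
Proof.
move=> L0 k1 Hy; have k0 : 0 < k by lia.
have Hx : x < k ^ x by rewrite ltn_expl.
rewrite /g (g_G _ L0 k1 Hy) -G_add //.
apply: g_G => //.
rewrite expnD.
have : (x + 1) * k ^ m <= k ^ x * k ^ m by rewrite leq_mul2r; apply/orP; right; lia.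
rewrite mulnC [k ^ m * _]mulnC; lia.
Qed.

Lemma g_digit L k kappa d : 0 < L -> 1 < k -> d < k -> g L k kappa d = kap0 kappa d %% L.
Proof.
move=> L0 k1 Hd; rewrite /g (g_G (n := 1) _ L0 k1) ?expn1 //.
by rewrite /= expn0 divn1.
Qed.

Lemma g_lt L k kappa i : 0 < L -> g L k kappa i < L.
Proof. by move=> L0; rewrite /g G_lt. Qed.

Lemma G_closed L k kappa n i : 0 < L -> 1 < k ->
  (forall d, d < k -> kap0 kappa d = d * kappa 1 %[mod L]) ->
  kappa 1 * k = kappa 1 %[mod L] -> i < k ^ n ->
  G L k kappa n i = kappa 1 * i %% L.
Proof.
move=> L0 k1 Hd Hk.
have k0 : 0 < k by lia.
have powk : forall n, kappa 1 * k ^ n = kappa 1 %[mod L].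
  elim=> [|n' IH]; first by rewrite expn0 muln1.
  rewrite expnSr mulnA -modnMml IH modnMml; exact: Hk.
elim: n i => [|n IH] i Hi.
  by move: Hi; rewrite expn0 ltnS leqn0 => /eqP ->; rewrite muln0 mod0n.
have -> : G L k kappa n.+1 i = (G L k kappa n (i %% k ^ n) + kap0 kappa (i %/ k ^ n)) %% L by [].
have Hkn : 0 < k ^ n by rewrite expn_gt0 k0.
have Hdk : i %/ k ^ n < k by rewrite ltn_divLR // -expnS.
rewrite IH ?ltn_pmod // modnDml -modnDmr Hd // modnDmr.
have e : kappa 1 * i = (i %/ k ^ n) * (kappa 1 * k ^ n) + kappa 1 * (i %% k ^ n).
  by rewrite {1}(divn_eq i (k ^ n)); lia.
rewrite e -[(i %/ k ^ n * (kappa 1 * k ^ n) + _) %% L]modnDml -(modnMmr (i %/ k ^ n) (kappa 1 * k ^ n)) powk modnMmr modnDml.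
by congr (_ %% L); lia.
Qed.

Definition Cond L k (kappa : nat -> nat) :=
  (forall s, 1 <= s <= k - 1 -> s * kappa 1 = kappa s %[mod L]) /\
  kappa (k - 1) = 0 %[mod L].

Lemma cond_periodic L k kappa : 0 < L -> 1 < k -> Cond L k kappa ->
  forall n, g L k kappa (n + L) = g L k kappa n.
Proof.
move=> L0 k1 [H1 H2] n.
have Hd : forall d, d < k -> kap0 kappa d = d * kappa 1 %[mod L].
  move=> d Hd; rewrite /kap0; case: eqP => [->|Hd0]; first by rewrite mul0n.
  by rewrite H1 //; apply/andP; split; lia.
have Hk : kappa 1 * k = kappa 1 %[mod L].
  have -> : k = (k - 1) + 1 by lia.
  rewrite mulnDr muln1 mulnC -modnDml H1; last lia.
  by rewrite H2 mod0n add0n.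
have cl : forall i, g L k kappa i = kappa 1 * i %% L.
  by move=> i; rewrite /g (G_closed L0 k1 Hd Hk) // ltn_expl.
by rewrite !cl mulnDr addnC modnMDl.
Qed.

Lemma pattern L k kappa : 0 < L -> 1 < k -> ~ Cond L k kappa ->
  exists P, P < k /\ (g L k kappa P + g L k kappa 1) %% L <> g L k kappa P.+1.
Proof.
move=> L0 k1 HC.
apply: NNPP => Hn; apply: HC.
have Hall : forall P, P < k -> (g L k kappa P + g L k kappa 1) %% L = g L k kappa P.+1.
  by move=> P HP; apply: NNPP => H; apply: Hn; exists P.
have g1 : g L k kappa 1 = kappa 1 %% L by rewrite g_digit.
have gs : forall s, s < k -> g L k kappa s = s * kappa 1 %% L.
  elim=> [|s IH] Hs; first by rewrite g_digit.
  rewrite -Hall; last lia.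
  by rewrite IH ?g1; [rewrite modnDm mulSn addnC | lia].
split.
  move=> s /andP [Hs1 Hs2].
  by rewrite -gs; [rewrite g_digit /kap0 //; [case: eqP => //; lia | lia] | lia].
have := Hall (k - 1) ltac:(lia).
have -> : (k - 1).+1 = k by lia.
have -> : g L k kappa k = g L k kappa 1 %% L.
  have := @g_add L k kappa 1 1 0 L0 k1 ltac:(by rewrite expn1; lia).
  rewrite expn1 mul1n addn0 => ->.
  rewrite [g L k kappa 0]g_digit //; last lia.
  by rewrite (_ : kap0 kappa 0 = 0) // mod0n addn0.
rewrite -[X in _ = X %% L]add0n => /eqP; rewrite eqn_modDr => /eqP.
rewrite g_digit //; last lia.
rewrite /kap0; case: eqP => [?|_]; [lia | by rewrite modn_mod].
Qed.

Lemma pigeon k l q : 0 < l -> 1 < k ->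
  exists m e, q < k ^ m /\ 0 < e /\ k ^ (e + m) = k ^ m %[mod l].
Proof.
move=> l0 k1.
pose f := fun i : 'I_l.+1 => Ordinal (ltn_pmod (k ^ (q + i)) l0).
have : ~~ injectiveb f.
  apply/negP => /injectiveP Hinj.
  have := leq_card f Hinj; rewrite !card_ord; lia.
move/injectivePn => [i [j Hij Hf]].
have Hf' : k ^ (q + i) %% l = k ^ (q + j) %% l by move: Hf => /(congr1 val).
have Hq : forall m, q <= m -> q < k ^ m.
  by move=> m Hm; apply: (leq_trans (ltn_expl q k1)); rewrite leq_exp2l.
case: (ltngtP i j) => Hlt.
- exists (q + i), (j - i); split; first by apply: Hq; lia.
  split; first lia.
  by rewrite Hf'; congr (k ^ _ %% l); lia.
- exists (q + j), (i - j); split; first by apply: Hq; lia.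
  split; first lia.
  by rewrite -Hf'; congr (k ^ _ %% l); lia.
- by move: Hij; rewrite (val_inj Hlt) eqxx.
Qed.

Lemma eq1 A V K y q z : q <= K -> y = K - q + z -> (A + V) * K + y + q = (A + V.+1) * K + z.
Proof. move=> h1 h2; rewrite h2 !mulnDl mulSn; lia. Qed.
Lemma eq2 H l E K V y : (H * l * E + V) * K + y = (H * E * K) * l + (V * K + y).
Proof. lia. Qed.
Lemma le1 H l E K : 0 < l -> 0 < E -> 0 < K -> H <= H * l * E * K.
Proof. move=> a b c. by rewrite -!mulnA leq_pmulr // !muln_gt0 a b c. Qed.
Lemma le2 H N T l E K V y : H = N + T * l -> H <= H * l * E * K -> N + T * l <= (H * l * E + V) * K + y.
Proof. move=> h1 h2; rewrite mulnDl; lia. Qed.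

Lemma lt_aux P a b c : 0 < a -> P.+1 * a <= b -> b < c -> (P * a).+1 < c.
Proof. move=> h0 h1 h2; rewrite mulSn in h1; lia. Qed.

Lemma modcancel L a b c d x y : (a + b + x) %% L = (a + c + y) %% L ->
  (a + b + x) %% L = (a + d + y) %% L -> c %% L = d %% L.
Proof.
move=> h1; rewrite h1 => /eqP; rewrite -!addnA eqn_modDl [c + y]addnC [d + y]addnC eqn_modDl.
by move/eqP.
Qed.

Lemma notper L k kappa N l T p : 0 < L -> 1 < k -> ~ Cond L k kappa -> 0 < l -> 0 < p ->
  ~ (forall t, T <= t -> g L k kappa (N + t * l) = g L k kappa (N + (t + p) * l)).
Proof.
move=> L0 k1 HC l0 p0 Hper.
have k0 : 0 < k by lia.
have [P [HPk HP]] := pattern L0 k1 HC.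
have Hq : forall n, N + T * l <= n -> n = N %[mod l] ->
    g L k kappa n = g L k kappa (n + p * l).
  move=> n Hn Hm.
  have HNn : N <= n by lia.
  have : l %| n - N by rewrite -eqn_mod_dvd //; apply/eqP.
  move/divnK => Ht.
  have Hn' : n = N + (n - N) %/ l * l by lia.
  have HT : T <= (n - N) %/ l by rewrite -(leq_pmul2r l0); lia.
  by rewrite Hn' Hper // mulnDl addnA -Hn'.
have q0 : 0 < p * l by rewrite muln_gt0 p0 l0.
have Hlq : l <= p * l by rewrite leq_pmull.
have [m [e [Hqm [e0 Hke]]]] := pigeon (p * l) l0 k1.
have K0 : 0 < k ^ m by rewrite expn_gt0 k0.
pose B0 := P * k ^ m + (k ^ m - p * l).
pose z := (N + (l - B0 %% l)) %% l.
pose y := k ^ m - p * l + z.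
have Hz : z < l by rewrite ltn_pmod.
have Hy : y < k ^ m by rewrite /y; lia.
have HzK : z < k ^ m by lia.
have Hcong : P * k ^ m + y = N %[mod l].
  have -> : P * k ^ m + y = B0 + z by rewrite /y /B0; lia.
  rewrite /z modnDmr.
  have Hb : B0 %% l < l by rewrite ltn_pmod.
  have -> : B0 + (N + (l - B0 %% l)) = (B0 %/ l + 1) * l + N.
    by rewrite {1}(divn_eq B0 l); lia.
  by rewrite modnMDl.
have Hydef : y = k ^ m - p * l + z by [].
clearbody y z B0.
pose H := N + T * l.
have HH : H = N + T * l by [].
clearbody H.
have EK : 1 < k ^ e.+2.
  by apply: (leq_trans k1); rewrite -{1}(expn1 k) leq_exp2l.
have key : forall V, V.+1 < k ^ e.+2 -> V * k ^ m + y = N %[mod l] ->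
   ((g L k kappa (H * l) + g L k kappa V) %% L + g L k kappa y) %% L =
   ((g L k kappa (H * l) + g L k kappa V.+1) %% L + g L k kappa z) %% L.
  move=> V HV HVc.
  have HV' : V < k ^ e.+2 by lia.
  have HHn : H <= H * l * k ^ e.+2 * k ^ m by apply: le1 => //; lia.
  have Hn := Hq ((H * l * k ^ e.+2 + V) * k ^ m + y).
  rewrite (eq1 _ _ (ltnW Hqm) Hydef) in Hn.
  rewrite !g_add // in Hn; apply: Hn; first exact: le2.
  by rewrite eq2 modnMDl.
have Hk2 : k < k ^ e.+2 by rewrite -{1}(expn1 k) ltn_exp2l.
have E1 := key P ltac:(lia) Hcong.
have Hke1 : k <= k ^ e by rewrite -{1}(expn1 k) leq_exp2l.
have H2a : (P * k ^ e).+1 < k ^ e.+2.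
  have h0 : 0 < k ^ e by rewrite expn_gt0 k0.
  have h1 : P.+1 * k ^ e <= k ^ e.+1 by rewrite expnS leq_mul2r HPk orbT.
  have h2 : k ^ e.+1 < k ^ e.+2 by rewrite ltn_exp2l.
  exact: lt_aux h0 h1 h2.
have H2b : P * k ^ e * k ^ m + y = N %[mod l].
  rewrite -mulnA -expnD -modnDml -modnMmr Hke modnMmr modnDml; exact: Hcong.
have E2 := key _ H2a H2b.
have G2a : g L k kappa (P * k ^ e) = g L k kappa P %% L.
  have := @g_add L k kappa P e 0 L0 k1 ltac:(by rewrite expn_gt0 k0); rewrite addn0 => ->.
  rewrite [g L k kappa 0]g_digit //.
  by rewrite (_ : kap0 kappa 0 = 0) // mod0n addn0.
have G2b : g L k kappa (P * k ^ e).+1 = (g L k kappa P + g L k kappa 1) %% L.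
  by have := @g_add L k kappa P e 1 L0 k1 (leq_trans k1 Hke1); rewrite addn1.
rewrite G2a G2b !modnDmr !modnDml in E2.
rewrite !modnDml in E1.
have E4 := modcancel E1 E2.
apply: HP; rewrite -E4 modn_small //; exact: g_lt.
Qed.

Theorem corollary3p1 (T : Type) (L k : nat) (a : nat -> T) (kappa : nat -> nat) :
  2 <= L -> 2 <= k ->
  (forall i j, i < L -> j < L -> a i = a j -> i = j) ->
  (forall s, 1 <= s <= k - 1 -> kappa s < L) ->
  (ult_periodic (TMseq L k (fun s _ => kappa s) a) <->
     ((forall s, 1 <= s <= k - 1 -> s * kappa 1 = kappa s %[mod L]) /\
      kappa (k - 1) = 0 %[mod L])) /\
  (~ ult_periodic (TMseq L k (fun s _ => kappa s) a) ->
     forall N l, 0 < l ->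
       ~ ult_periodic (fun t => TMseq L k (fun s _ => kappa s) a (N + t * l))).
Proof.
move=> L2 k2 ainj kL.
have L0 : 0 < L by lia.
have k1 : 1 < k by lia.
have S_eq : forall m, TMseq L k (fun s _ => kappa s) a m = a (g L k kappa m).
  move=> m; rewrite /TMseq /g.
  have [_ H2] := TMword_spec kappa m L0 (ltnW k1).
  by rewrite H2 // ltn_expl.
have ginj : forall x y, a (g L k kappa x) = a (g L k kappa y) -> g L k kappa x = g L k kappa y.
  by move=> x y /ainj; apply; apply: g_lt.
have Bpart : ~ Cond L k kappa -> forall N l, 0 < l ->
    ~ ult_periodic (fun t => TMseq L k (fun s _ => kappa s) a (N + t * l)).
  move=> HC N l l0 [T' [p [p0 Hp]]].
  apply: (notper (N:=N) (T:=T') L0 k1 HC l0 p0) => t Ht.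
  by apply: ginj; rewrite -!S_eq; apply: Hp.
have Apart : Cond L k kappa -> ult_periodic (TMseq L k (fun s _ => kappa s) a).
  move=> HC; exists 0, L; split => // n _.
  by rewrite !S_eq cond_periodic.
split.
  split.
    move=> Hper; apply: NNPP => HC; apply: (Bpart HC 0 1 isT).
    case: Hper => [N' [l' [h1 h2]]]; exists N', l'; split => // n hn.
    by rewrite !add0n !muln1; apply: h2.
  by move=> HC; apply: Apart.
by move=> Hn; apply: Bpart => HC; apply: Hn; apply: Apart.
Qed.
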